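(* Let $\epsilon>0$. Then, unconditionally, for every complex $s$ with $\Re(s)>1$, $$\int_0^1 f_\epsilon(u)\,u^{s-1}\,du = \frac{1}{\zeta(1+\epsilon)}\,\frac{1}{s-1} - \frac{1}{\zeta(s+\epsilon)}\,\frac{\zeta(s)}{s}.$$
   Context: $\mu$ is the Möbius function and $\zeta$ the Riemann zeta function. For real $x$, $\{x\}=x-[x]$ denotes the fractional part. For $\epsilon>0$, $f_\epsilon$ is the function on $(0,\infty)$ defined pointwise by $f_\epsilon(t)=\sum_{n=1}^\infty \frac{\mu(n)}{n^\epsilon}\left\{\frac1{nt}\right\}$ (absolutely convergent since $\{1/nt\}\le 1/nt$); it satisfies $|f_\epsilon(t)|\le \zeta(1+\epsilon)/t$. *)

(* Defs.v *)
From Stdlib Require Import Reals.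
From Coquelicot Require Import Coquelicot.
From mathcomp Require Import ssreflect ssrbool eqtype ssrnat seq prime.

Open Scope R_scope.

(* Moebius function mu(n) for n >= 1 (value 0 at n = 0, never used):
   mu(n) = (-1)^k if n is a product of k distinct primes, 0 otherwise. *)
Definition mobius (n : nat) : R :=
  if n == 0%nat then 0
  else if all (fun p => logn p n == 1%nat) (primes n)
       then (-1) ^ (size (primes n))
       else 0.

(* Complex power x^z := exp(z log x) for real x > 0 and complex z. *)
Definition cpowR (x : R) (z : C) : C :=
  (exp (Re z * ln x) * cos (Im z * ln x), exp (Re z * ln x) * sin (Im z * ln x)).

(* Riemann zeta function on Re s > 1, as the Dirichlet series sum_{n>=1} n^{-s}
   (real and imaginary parts summed separately). *)
Definition zeta (s : C) : C :=
  (Series (fun k => Re (cpowR (INR (S k)) (Copp s))),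
   Series (fun k => Im (cpowR (INR (S k)) (Copp s)))).

Definition f_eps (eps t : R) : R :=
  Series (fun k => mobius (S k) / Rpower (INR (S k)) eps * frac_part (/ (INR (S k) * t))).

(* Main.v *)
Set Warnings "-notation-overridden -ambiguous-paths -hiding-delimiting-key -redundant-canonical-projection".
Require Import Defs.
From Stdlib Require Import Reals Lra Lia ZArith.
From Coquelicot Require Import Coquelicot.
From HB Require Import structures.
From mathcomp Require Import ssreflect ssrbool ssrfun eqtype ssrnat seq path div fintype bigop prime.
From mathcomp Require Import zify.

Open Scope R_scope.


HB.instance Definition _ := Monoid.isComLaw.Build R 0 Rplus (fun a b c => esym (Rplus_assoc a b c)) Rplus_comm Rplus_0_l.

Lemma mob_pe p e : prime p -> (0 < e)%N -> ~~ (p %| e) -> mobius (p * e) = - mobius e.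
Proof.
move=> pp e0 npe.
have p0 : (0 < p)%N by apply: prime_gt0.
have pe0 : (p * e != 0)%N by rewrite muln_eq0 negb_or -!lt0n p0 e0.
have npr : p \notin primes e by rewrite mem_primes pp e0 /=.
have hperm : perm_eq (primes (p * e)) (p :: primes e).
  apply: uniq_perm; first exact: primes_uniq.
    by rewrite /= npr primes_uniq.
  by move=> q; rewrite primesM // primes_prime // mem_seq1 in_cons.
have hsz : size (primes (p * e)) = (size (primes e)).+1 by rewrite (perm_size hperm).
have e0' : (e == 0%N) = false by apply/negbTE; rewrite -lt0n.
rewrite /mobius (negbTE pe0) e0' hsz.
rewrite (perm_all _ hperm) /=.
rewrite lognM // logn_prime // eqxx (logn_coprime (_ : coprime p e)) ?addn0 /=; last first.
  by rewrite prime_coprime.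
have -> : all (fun q => logn q (p * e) == 1%N) (primes e) = all (fun q => logn q e == 1%N) (primes e).
  apply: eq_in_all => q qe.
  rewrite lognM // logn_prime //.
  have -> : (q == p) = false by apply/eqP => eqp; move: npr; rewrite -eqp qe.
  by [].
case: ifP => _ /=; lra.
Qed.

Lemma mob_sq p d : prime p -> (0 < d)%N -> p * p %| d -> mobius d = 0.
Proof.
move=> pp d0 ppd.
have dn0 : (d == 0%N) = false by apply/negbTE; rewrite -lt0n.
rewrite /mobius dn0.
have pin : p \in primes d by rewrite mem_primes pp d0 /= (dvdn_trans (dvdn_mulr p (dvdnn p)) ppd).
have hl : (2 <= logn p d)%N by rewrite -pfactor_dvdn // expnS expn1.
case: ifP => // /allP /(_ p pin) /eqP hp; move: hl; rewrite hp //.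
Qed.

Lemma mob_sum n : (0 < n)%N -> \big[Rplus/0]_(d <- divisors n) mobius d = if n == 1%N then 1 else 0.
Proof.
move=> n0.
case: (eqVneq n 1%N) => [-> | n1].
  by rewrite /divisors /= big_cons big_nil /mobius /=; lra.
have n2 : (1 < n)%N by rewrite ltn_neqAle eq_sym n1 n0.
set p := pdiv n.
have pp : prime p by apply: pdiv_prime.
have pn : p %| n by apply: pdiv_dvd.
have p0 : (0 < p)%N by apply: prime_gt0.
rewrite (bigID (fun d => p %| d)) /=.
have H1 : \big[Rplus/0]_(d <- divisors n | p %| d) mobius d
        = \big[Rplus/0]_(d <- divisors n | ~~ (p %| d)) mobius (p * d).
  rewrite (bigID (fun d => p * p %| d)) /=.
  rewrite [X in Rplus X _]big1_seq; last first.
    move=> d /andP [/andP [_ ppd] dd].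
    have d0 : (0 < d)%N by move: dd; rewrite -dvdn_divisors // => /dvdn_gt0; apply.
    exact: (mob_sq _ _ pp d0 ppd).
  rewrite Rplus_0_l -big_filter -[RHS]big_filter -(big_map (muln p) xpredT).
  apply: perm_big.
  apply: uniq_perm.
  - by rewrite filter_uniq // divisors_uniq.
  - rewrite map_inj_uniq ?filter_uniq ?divisors_uniq //.
    by move=> x y /eqP; rewrite eqn_pmul2l // => /eqP.
  move=> d; rewrite mem_filter.
  apply/idP/idP.
  - move=> /andP [/andP [pd nppd] dd].
    apply/mapP; exists (d %/ p); last by rewrite mulnC divnK.
    rewrite mem_filter -!dvdn_divisors //.
    rewrite -dvdn_divisors // in dd.
    apply/andP; split.
      apply/negP => hp; move: nppd; rewrite -(divnK pd) mulnC.
      by rewrite dvdn_pmul2l // ?hp.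
    apply: dvdn_trans dd; rewrite -{2}(divnK pd); exact: dvdn_mulr.
  - move=> /mapP [e]; rewrite mem_filter => /andP [npe ed] ->.
    rewrite -dvdn_divisors // in ed.
    rewrite dvdn_mulr // dvdn_pmul2l // npe /= -dvdn_divisors //.
    by rewrite Gauss_dvd ?pn ?ed // prime_coprime.
rewrite H1 -big_split /=.
apply: big1_seq => d /andP [npd dd].
rewrite mob_pe //; first lra.
by move: dd; rewrite -dvdn_divisors // => /dvdn_gt0; apply.
Qed.

Lemma sum_n_big (f : nat -> R) N : sum_n f N = \big[Rplus/0]_(i <- iota 0 N.+1) f i.
Proof.
elim: N => [|N IH]; first by rewrite sum_O big_cons big_nil Rplus_0_r.
have -> : iota 0 N.+2 = iota 0 N.+1 ++ [:: N.+1] by rewrite -[N.+2]addn1 iotaD.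
by rewrite sum_Sn IH big_cat big_cons big_nil /= Rplus_0_r.
Qed.

Lemma mob_sum_n (k N : nat) : (0 < k)%N -> (k <= S N)%N ->
  sum_n (fun i => if S i %| k then mobius (S i) else 0) N = if k == 1%N then 1 else 0.
Proof.
move=> k0 kN.
rewrite sum_n_big -(big_map S xpredT (fun d => if d %| k then mobius d else 0)).
have -> : map S (iota 0 N.+1) = iota 1 N.+1.
  by rewrite -(addn0 1%N) iotaDl; apply: eq_map => x; rewrite add1n.
have -> : \big[Rplus/0]_(i <- iota 1 N.+1) (if i %| k then mobius i else 0)
        = \big[Rplus/0]_(i <- iota 0 N.+2) (if i %| k then mobius i else 0).
  rewrite [in RHS]/= big_cons.
  have -> : (if 0 %| k then mobius 0 else 0) = 0 by rewrite /mobius /=; case: ifP.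
  by rewrite Rplus_0_l.
rewrite -big_mkcond -big_filter -mob_sum //.
apply: perm_big; apply: uniq_perm.
- by rewrite filter_uniq // iota_uniq.
- exact: divisors_uniq.
move=> d; rewrite mem_filter mem_iota -dvdn_divisors //= add0n.
apply/andP/idP => [[] //| dk]; split => //.
by apply: leq_ltn_trans (dvdn_leq k0 dk) _.
Qed.


Lemma test_lia (j N : nat) : (j <= N)%nat -> (j < S N)%nat.
Proof. lia. Qed.
Lemma test_lia2 (j N : nat) : le j N -> lt j (S N).
Proof. lia. Qed.

Lemma sum_n_swap {G : AbelianMonoid} (H : nat -> nat -> G) N1 N2 :
  sum_n (fun i => sum_n (fun k => H i k) N2) N1 = sum_n (fun k => sum_n (fun i => H i k) N1) N2.
Proof.
induction N1 as [|N1 IH].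
- rewrite sum_O. apply sum_n_ext; intro k; now rewrite sum_O.
- rewrite sum_Sn IH -sum_n_plus. apply sum_n_ext; intro k; now rewrite sum_Sn.
Qed.

Lemma sum_n_zero {G : AbelianMonoid} (f : nat -> G) N :
  (forall j, le j N -> f j = zero) -> sum_n f N = zero.
Proof.
induction N as [|N IH]; intro H.
- rewrite sum_O; apply H; lia.
- rewrite sum_Sn IH. rewrite H. apply plus_zero_l. lia. intros j Hj; apply H; lia.
Qed.

Lemma sum_n_delta {G : AbelianMonoid} (v : G) j0 N :
  le j0 N -> sum_n (fun j => if Nat.eqb j j0 then v else zero) N = v.
Proof.
induction N as [|N IH]; intro H.
- assert (j0 = O) by lia; subst. rewrite sum_O. reflexivity.
- destruct (Nat.eq_dec j0 (S N)) as [->|ne].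
  + rewrite sum_Sn sum_n_zero. rewrite Nat.eqb_refl. apply plus_zero_l.
    intros j Hj. destruct (Nat.eqb_spec j (S N)); [lia|reflexivity].
  + rewrite sum_Sn IH; [|lia]. destruct (Nat.eqb_spec (S N) j0); [lia|]. apply plus_zero_r.
Qed.

Lemma Cmod_sum_n (u : nat -> C) N : Cmod (sum_n u N) <= sum_n (fun k => Cmod (u k)) N.
Proof.
induction N as [|N IH].
- rewrite !sum_O; lra.
- rewrite !sum_Sn. eapply Rle_trans; [apply Cmod_triangle|]. change (plus (sum_n (fun k => Cmod (u k)) N) (Cmod (u (S N)))) with (sum_n (fun k => Cmod (u k)) N + Cmod (u (S N))). lra.
Qed.

Lemma RtoC_sum_n (r : nat -> R) N : RtoC (sum_n r N) = sum_n (fun k => RtoC (r k)) N.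
Proof.
induction N as [|N IH].
- now rewrite !sum_O.
- rewrite !sum_Sn -IH. change (plus (sum_n r N) (r (S N))) with (sum_n r N + r (S N)).
  now rewrite RtoC_plus.
Qed.

Lemma fst_sum_n (u : nat -> C) N : fst (sum_n u N) = sum_n (fun k => fst (u k)) N.
Proof.
induction N as [|N IH].
- now rewrite !sum_O.
- rewrite !sum_Sn -IH. reflexivity.
Qed.

Lemma snd_sum_n (u : nat -> C) N : snd (sum_n u N) = sum_n (fun k => snd (u k)) N.
Proof.
induction N as [|N IH].
- now rewrite !sum_O.
- rewrite !sum_Sn -IH. reflexivity.
Qed.

Lemma Cmult_sum_n_r (u : nat -> C) z N : Cmult (sum_n u N) z = sum_n (fun k => Cmult (u k) z) N.
Proof. symmetry. apply (sum_n_mult_r (K := C_Ring)). Qed.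

Lemma Cmult_sum_n_l (u : nat -> C) z N : Cmult z (sum_n u N) = sum_n (fun k => Cmult z (u k)) N.
Proof. symmetry. apply (sum_n_mult_l (K := C_Ring)). Qed.


Lemma cpowR_add x z w : cpowR x (Cplus z w) = Cmult (cpowR x z) (cpowR x w).
Proof.
destruct z as [a b], w as [c d]. unfold cpowR, Cmult, Cplus, Re, Im; simpl.
rewrite !Rmult_plus_distr_r exp_plus cos_plus sin_plus.
apply injective_projections; simpl; ring.
Qed.

Lemma cpowR_mul x y z : 0 < x -> 0 < y -> cpowR (x * y) z = Cmult (cpowR x z) (cpowR y z).
Proof.
intros hx hy. destruct z as [a b]. unfold cpowR, Cmult, Re, Im; simpl.
rewrite ln_mult // !Rmult_plus_distr_l exp_plus cos_plus sin_plus.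
apply injective_projections; simpl; ring.
Qed.

Lemma Cmod_cpowR x z : Cmod (cpowR x z) = exp (Re z * ln x).
Proof.
unfold cpowR, Cmod; cbn [fst snd].
set E := exp (Re z * ln x). set t := Im z * ln x.
replace ((E * cos t) ^ 2 + (E * sin t) ^ 2) with (E ^ 2).
- apply sqrt_pow2. unfold E; left; apply exp_pos.
- rewrite <- (Rmult_1_r (E ^ 2)). rewrite <- (sin2_cos2 t). unfold Rsqr. ring.
Qed.

Lemma cpowR_R x r : cpowR x (RtoC r) = RtoC (Rpower x r).
Proof.
unfold cpowR, RtoC, Rpower, Re, Im; simpl.
rewrite Rmult_0_l cos_0 sin_0. apply injective_projections; simpl; ring.
Qed.

Lemma cpowR_1 z : cpowR 1 z = RtoC 1.
Proof.
unfold cpowR, RtoC. rewrite ln_1 !Rmult_0_r exp_0 cos_0 sin_0.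
apply injective_projections; simpl; ring.
Qed.

Lemma cpowR_m1 x w : 0 < x -> cpowR x (Cminus w (RtoC 1)) = Cmult (RtoC (/ x)) (cpowR x w).
Proof.
intros hx. destruct w as [a b]. unfold cpowR, Cminus, Cplus, Copp, Cmult, RtoC, Re, Im; simpl.
replace ((a + - (1)) * ln x) with (a * ln x + - ln x) by ring.
replace ((b + - 0) * ln x) with (b * ln x) by ring.
rewrite exp_plus exp_Ropp exp_ln //.
apply injective_projections; simpl; ring.
Qed.

Lemma Re_cpowR x z : Re (cpowR x z) = exp (Re z * ln x) * cos (Im z * ln x).
Proof. reflexivity. Qed.
Lemma Im_cpowR x z : Im (cpowR x z) = exp (Re z * ln x) * sin (Im z * ln x).
Proof. reflexivity. Qed.

Lemma is_RInt_C (f : R -> C) a b (l : C) :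
  is_RInt (fun t => fst (f t)) a b (fst l) -> is_RInt (fun t => snd (f t)) a b (snd l) ->
  is_RInt (V := C_R_NormedModule) f a b l.
Proof. destruct l as [l1 l2]. intros H1 H2. apply (is_RInt_fct_extend_pair f a b l1 l2 H1 H2). Qed.

Lemma is_RInt_cpow (w : C) a b : 0 < a -> 0 < b -> w <> RtoC 0 ->
  is_RInt (V := C_R_NormedModule) (fun u => cpowR u (Cminus w (RtoC 1))) a b
    (Cdiv (Cminus (cpowR b w) (cpowR a w)) w).
Proof.
intros ha hb hw. destruct w as [p q].
assert (hD : p * p + q * q <> 0).
{ intro h. apply hw. assert (p = 0) by nra. assert (q = 0) by nra. subst. reflexivity. }
set D := p * p + q * q.
assert (hpos : forall t, Rmin a b <= t <= Rmax a b -> 0 < t).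
{ intros t [h1 _]. eapply Rlt_le_trans; [|exact h1]. apply Rmin_glb_lt; lra. }
apply is_RInt_C.
- apply is_RInt_ext with (f := fun t => / t * (exp (p * ln t) * cos (q * ln t))).
  { intros t ht. rewrite cpowR_m1. unfold cpowR, Cmult, RtoC; simpl. ring.
    apply hpos; lra. }
  evar (l : R). replace (fst _) with l.
  apply (is_RInt_derive (V := R_CompleteNormedModule)
   (fun t => (p * (exp (p * ln t) * cos (q * ln t)) + q * (exp (p * ln t) * sin (q * ln t))) / D)).
  + intros t ht. specialize (hpos t ht). auto_derive. repeat split; lra.
    unfold D in *. field; repeat split; solve [exact hD | lra].
  + intros t ht. specialize (hpos t ht). apply: (ex_derive_continuous (K := R_AbsRing) (V := R_NormedModule)). auto_derive. repeat split; lra.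
  + unfold l. unfold minus, plus, opp; simpl. unfold Cdiv, Cminus, Cmult, Cinv, Cplus, Copp; simpl.
    unfold D. field. exact hD.
- apply is_RInt_ext with (f := fun t => / t * (exp (p * ln t) * sin (q * ln t))).
  { intros t ht. rewrite cpowR_m1. unfold cpowR, Cmult, RtoC; simpl. ring.
    apply hpos; lra. }
  evar (l : R). replace (snd _) with l.
  apply (is_RInt_derive (V := R_CompleteNormedModule)
   (fun t => (p * (exp (p * ln t) * sin (q * ln t)) - q * (exp (p * ln t) * cos (q * ln t))) / D)).
  + intros t ht. specialize (hpos t ht). auto_derive. repeat split; lra.
    unfold D in *. field; repeat split; solve [exact hD | lra].
  + intros t ht. specialize (hpos t ht). apply: (ex_derive_continuous (K := R_AbsRing) (V := R_NormedModule)). auto_derive. repeat split; lra.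
  + unfold l. unfold minus, plus, opp; simpl. unfold Cdiv, Cminus, Cmult, Cinv, Cplus, Copp; simpl.
    unfold D. field. exact hD.
Qed.


Definition ns (k : nat) : R := INR (S k).

Lemma ns_pos k : 0 < ns k.
Proof. unfold ns. apply lt_0_INR. lia. Qed.

Lemma ns_ge1 k : 1 <= ns k.
Proof. unfold ns. rewrite S_INR. pose proof (pos_INR k). lra. Qed.

Lemma exp_le_mono x y : x <= y -> exp x <= exp y.
Proof. intros [h|h]; [left; apply exp_increasing; exact h | rewrite h; lra]. Qed.

Lemma ln_le_m1 y : 0 < y -> ln y <= y - 1.
Proof. intros hy. pose proof (exp_ineq1_le (ln y)). rewrite exp_ln in H; lra. Qed.

Lemma Rpower_pos x y : 0 < Rpower x y.
Proof. apply exp_pos. Qed.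

Definition Bt (t : R) := t / (t - 1).

Lemma pterm_bound t n : 1 < t -> 2 <= n ->
  (t - 1) * Rpower n (- t) <= Rpower (n - 1) (1 - t) - Rpower n (1 - t).
Proof.
intros ht hn. unfold Rpower.
set L := ln n. set L1 := ln (n - 1).
assert (hLL : 1 / n <= L - L1).
{ unfold L, L1. rewrite <- ln_div; try lra.
  pose proof (ln_le_m1 (n / (n - 1))). 
  assert (h2 : ln ((n - 1) / n) <= (n - 1) / n - 1) by (apply ln_le_m1; apply Rdiv_lt_0_compat; lra).
  assert (ln ((n-1)/n) = - ln (n / (n-1))).
  { rewrite <- ln_Rinv. f_equal. field. lra. apply Rdiv_lt_0_compat; lra. }
  assert ((n - 1) / n - 1 = - (1 / n)) by (field; lra). lra. }
assert (e1 : exp ((1 - t) * L1) = exp ((1 - t) * L) * exp ((t - 1) * (L - L1))).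
{ rewrite <- exp_plus. f_equal. ring. }
assert (e2 : exp ((t - 1) * (L - L1)) >= 1 + (t - 1) * (L - L1)) by (apply Rle_ge, exp_ineq1_le).
assert (e3 : exp (- t * L) = exp ((1 - t) * L) / n).
{ unfold L. replace (-t * ln n) with ((1 - t) * ln n + - ln n) by ring. rewrite exp_plus exp_Ropp exp_ln; lra. }
rewrite e1 e3.
assert (0 < exp ((1 - t) * L)) by apply exp_pos.
assert ((t - 1) * (1 / n) <= (t - 1) * (L - L1)) by (apply Rmult_le_compat_l; lra).
assert (exp ((1 - t) * L) * ((t - 1) * (1 / n)) <= exp ((1 - t) * L) * (exp ((t - 1) * (L - L1)) - 1)).
{ apply Rmult_le_compat_l; lra. }
replace ((t - 1) * (exp ((1 - t) * L) / n)) with (exp ((1 - t) * L) * ((t - 1) * (1 / n))) by (field; lra).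
lra.
Qed.

Lemma psum_bound t N : 1 < t ->
  sum_n (fun k => Rpower (ns k) (- t)) N <= 1 + (1 - Rpower (ns N) (1 - t)) / (t - 1).
Proof.
intros ht. induction N as [|N IH].
- rewrite sum_O. unfold ns; simpl. rewrite /Rpower ln_1 !Rmult_0_r exp_0.
  replace ((1 - 1) / (t - 1)) with 0 by (field; lra). lra.
- rewrite sum_Sn. change (plus ?a ?b) with (a + b).
  pose proof (pterm_bound t (ns (S N)) ht).
  assert (ns (S N) - 1 = ns N) by (unfold ns; rewrite (S_INR (S N)); ring).
  rewrite H0 in H.
  assert (2 <= ns (S N)) by (pose proof (ns_ge1 N); lra).
  specialize (H H1).
  assert (Rpower (ns (S N)) (- t) <= (Rpower (ns N) (1 - t) - Rpower (ns (S N)) (1 - t)) / (t - 1)).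
  { apply (Rmult_le_reg_l (t - 1)); [lra|]. replace ((t - 1) * ((Rpower (ns N) (1 - t) - Rpower (ns (S N)) (1 - t)) / (t - 1))) with (Rpower (ns N) (1 - t) - Rpower (ns (S N)) (1 - t)) by (field; lra). exact H. }
  assert ((1 - Rpower (ns N) (1 - t)) / (t - 1) + (Rpower (ns N) (1 - t) - Rpower (ns (S N)) (1 - t)) / (t - 1) = (1 - Rpower (ns (S N)) (1 - t)) / (t - 1)) by (field; lra).
  lra.
Qed.

Lemma psum_Bt t N : 1 < t -> sum_n (fun k => Rpower (ns k) (- t)) N <= Bt t.
Proof.
intros ht. eapply Rle_trans; [apply psum_bound; exact ht|].
unfold Bt. pose proof (Rpower_pos (ns N) (1 - t)).
assert ((1 - Rpower (ns N) (1 - t)) / (t - 1) <= 1 / (t - 1)).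
{ apply Rmult_le_compat_r. left; apply Rinv_0_lt_compat; lra. lra. }
replace (t / (t - 1)) with (1 + 1 / (t - 1)) by (field; lra). lra.
Qed.

Lemma sum_n_nonneg (f : nat -> R) N : (forall k, 0 <= f k) -> 0 <= sum_n f N.
Proof.
intros H. induction N as [|N IH]; [rewrite sum_O; apply H|].
rewrite sum_Sn. change (plus ?a ?b) with (a + b). pose proof (H (S N)). lra.
Qed.

Lemma sum_n_le (f g : nat -> R) N : (forall k, f k <= g k) -> sum_n f N <= sum_n g N.
Proof.
intros H. induction N as [|N IH]; [rewrite !sum_O; apply H|].
rewrite !sum_Sn. change (plus ?a ?b) with (a + b). pose proof (H (S N)).
change (plus (sum_n g N) (g (S N))) with (sum_n g N + g (S N)). lra.
Qed.

Lemma ex_series_bounded (a : nat -> R) M : (forall k, 0 <= a k) -> (forall N, sum_n a N <= M) -> ex_series a.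
Proof.
intros h0 hM.
destruct (ex_finite_lim_seq_incr (sum_n a) M) as [l hl].
- intros n. rewrite sum_Sn. change (plus ?x ?y) with (x + y). pose proof (h0 (S n)). lra.
- exact hM.
- exists l. exact hl.
Qed.

Lemma ex_pser_R t : 1 < t -> ex_series (fun k => Rpower (ns k) (- t)).
Proof.
intros ht. apply (ex_series_bounded _ (Bt t)).
- intros; left; apply Rpower_pos.
- intros; apply psum_Bt; exact ht.
Qed.

Lemma rankin_pt (a x sg t : R) : 0 < a -> 0 < x -> 1 < t -> t < sg ->
  (if Rle_dec a (/ x) then Rpower a sg else Rpower x (- sg)) <= Rpower a (sg - t) * Rpower x (- t).
Proof.
intros ha hx ht hts. unfold Rpower. rewrite <- exp_plus.
destruct (Rle_dec a (/ x)) as [h|h]; apply exp_le_mono.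
- assert (a * x <= 1).
  { apply (Rmult_le_compat_r x) in h; [|lra]. rewrite Rinv_l in h; lra. }
  assert (ln (a * x) <= 0) by (rewrite <- ln_1; apply ln_le; [apply Rmult_lt_0_compat|]; lra).
  rewrite ln_mult in H0; try lra. nra.
- assert (1 < a * x).
  { apply Rnot_le_lt in h. apply (Rmult_lt_compat_r x) in h; [|lra]. rewrite Rinv_l in h; lra. }
  assert (0 < ln (a * x)) by (rewrite <- ln_1; apply ln_increasing; lra).
  rewrite ln_mult in H0; try lra. nra.
Qed.

Lemma sum_n_sq (u : nat -> R) N :
  sum_n (fun i => sum_n (fun j => u i * u j) N) N = sum_n u N * sum_n u N.
Proof.
transitivity (sum_n (fun i => mult (u i) (sum_n u N)) N).
- apply sum_n_ext; intro i. rewrite <- (sum_n_mult_l (K := R_Ring)). reflexivity.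
- apply (sum_n_mult_r (K := R_Ring)).
Qed.

Lemma rankin (a sg t : R) N : 0 < a -> 1 < t -> t < sg ->
  sum_n (fun i => sum_n (fun j =>
     if Rle_dec a (/ (ns i * ns j)) then Rpower a sg else Rpower (ns i * ns j) (- sg)) N) N
  <= Rpower a (sg - t) * (Bt t * Bt t).
Proof.
intros ha ht hts.
eapply Rle_trans.
{ apply sum_n_le; intro i. apply sum_n_le; intro j.
  apply (rankin_pt a (ns i * ns j) sg t ha); try lra.
  apply Rmult_lt_0_compat; apply ns_pos. }
eapply Rle_trans with (Rpower a (sg - t) * (sum_n (fun k => Rpower (ns k) (- t)) N * sum_n (fun k => Rpower (ns k) (- t)) N)).
{ right. rewrite -sum_n_sq.
  transitivity (mult (Rpower a (sg - t)) (sum_n (fun i => sum_n (fun j => Rpower (ns i) (-t) * Rpower (ns j) (-t)) N) N)); [|reflexivity].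
  rewrite <- (sum_n_mult_l (K := R_Ring)). apply sum_n_ext; intro i.
  rewrite <- (sum_n_mult_l (K := R_Ring)). apply sum_n_ext; intro j.
  unfold mult; simpl. rewrite (Rpower_mult_distr (ns i)); try apply ns_pos. reflexivity. }
apply Rmult_le_compat_l; [left; apply Rpower_pos|].
pose proof (psum_Bt t N ht).
pose proof (sum_n_nonneg (fun k => Rpower (ns k) (- t)) N (fun k => Rlt_le _ _ (Rpower_pos _ _))).
apply Rmult_le_compat; lra.
Qed.

Lemma Rpower_small (al eta : R) : 0 < al -> 0 < eta ->
  exists del, 0 < del /\ forall a, 0 < a < del -> Rpower a al < eta.
Proof.
intros hal het. exists (exp (ln eta / al)). split; [apply exp_pos|].
intros a [ha hd]. unfold Rpower.
apply Rlt_le_trans with (exp (ln eta)); [apply exp_increasing | rewrite exp_ln; lra].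
assert (ln a < ln eta / al).
{ rewrite <- (ln_exp (ln eta / al)). apply ln_increasing; lra. }
apply (Rmult_lt_compat_l al) in H; [|lra].
replace (al * (ln eta / al)) with (ln eta) in H by (field; lra). lra.
Qed.


Lemma step1 {G : AbelianMonoid} (g : nat -> G) p N : (0 < p)%N ->
  (if (p <= S N)%N then g p else zero) = sum_n (fun k => if Nat.eqb p (S k) then g (S k) else zero) N.
Proof.
intros hp. case: ifP => hpN.
- destruct p as [|k0]; [lia|].
  rewrite (sum_n_ext _ (fun k => if Nat.eqb k k0 then g (S k0) else zero)).
  + symmetry; apply sum_n_delta; lia.
  + intros k. destruct (Nat.eqb_spec (S k0) (S k)), (Nat.eqb_spec k k0); try lia; subst; reflexivity.
- symmetry; apply sum_n_zero. intros j hj. destruct (Nat.eqb_spec p (S j)); [lia|reflexivity].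
Qed.

Lemma inner_j (i k N : nat) (r : R) : (k <= N)%N ->
  sum_n (fun j => if Nat.eqb (S i * S j)%N (S k) then r else 0) N = if (S i %| S k)%N then r else 0.
Proof.
intros hk. case: ifP => hd.
- move: hd => /dvdnP [m hm].
  destruct m as [|m0]; [lia|].
  rewrite (sum_n_ext _ (fun j => if Nat.eqb j m0 then r else zero)).
  + apply sum_n_delta. nia.
  + intros j. destruct (Nat.eqb_spec (S i * S j)%N (S k)), (Nat.eqb_spec j m0); try reflexivity.
    * exfalso. apply n. assert (S i * S j = S m0 * S i)%N by lia. nia.
    * subst. lia.
- apply: (sum_n_zero (G := R_AbelianMonoid)). intros j hj. destruct (Nat.eqb_spec (S i * S j)%N (S k)); [|reflexivity].
  exfalso. move: hd => /negP; apply. apply/dvdnP. exists (S j). lia.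
Qed.

Lemma Kcomb (F : nat -> C) N :
  sum_n (fun i => sum_n (fun j => if (S i * S j <= S N)%N
      then Cmult (RtoC (mobius (S i))) (F (S i * S j)%N) else zero) N) N = F 1%N.
Proof.
rewrite (sum_n_ext _ (fun i => sum_n (fun k => sum_n (fun j =>
   if Nat.eqb (S i * S j)%N (S k) then Cmult (RtoC (mobius (S i))) (F (S k)) else zero) N) N)).
2:{ intros i. rewrite <- sum_n_swap. apply sum_n_ext. intros j.
    rewrite (step1 (fun p => Cmult (RtoC (mobius (S i))) (F p))). reflexivity. lia. }
rewrite sum_n_swap.
rewrite (sum_n_ext_loc _ (fun k => if Nat.eqb k 0 then F 1%N else zero)).
- apply sum_n_delta. lia.
- intros k hk.
  rewrite (sum_n_ext _ (fun i => Cmult (RtoC (sum_n (fun j => if Nat.eqb (S i * S j)%N (S k) then mobius (S i) else 0) N)) (F (S k)))).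
  2:{ intros i. rewrite RtoC_sum_n Cmult_sum_n_r. apply sum_n_ext. intros j.
      destruct (Nat.eqb (S i * S j)%N (S k)); [reflexivity|].
      apply injective_projections; simpl; ring. }
  rewrite -Cmult_sum_n_r -RtoC_sum_n.
  rewrite (sum_n_ext _ (fun i => if (S i %| S k)%N then mobius (S i) else 0)).
  2:{ intros i. apply inner_j. apply/leP. lia. }
  rewrite mob_sum_n; [|lia|lia].
  destruct k as [|k'].
  + simpl. apply injective_projections; simpl; ring.
  + simpl. apply injective_projections; simpl; ring.
Qed.


Definition CSeries (u : nat -> C) : C := (Series (fun k => Re (u k)), Series (fun k => Im (u k))).

Definition cvC (u : nat -> C) (L : C) :=
  forall e, 0 < e -> exists N0, forall N, le N0 N -> Cmod (Cminus (u N) L) < e.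

Lemma Cmod_le_sum (z : C) : Cmod z <= Rabs (Re z) + Rabs (Im z).
Proof.
destruct z as [a b]. unfold Cmod, Re, Im; simpl.
rewrite <- (sqrt_square (Rabs a + Rabs b)); [|pose proof (Rabs_pos a); pose proof (Rabs_pos b); lra].
apply sqrt_le_1_alt.
assert (a * a = Rabs a * Rabs a) by (rewrite <- Rabs_mult; rewrite Rabs_right; [ring|apply Rle_ge, Rle_0_sqr]).
assert (b * b = Rabs b * Rabs b) by (rewrite <- Rabs_mult; rewrite Rabs_right; [ring|apply Rle_ge, Rle_0_sqr]).
pose proof (Rabs_pos a); pose proof (Rabs_pos b). nra.
Qed.

Lemma im_le_Cmod (c : C) : Rabs (Im c) <= Cmod c.
Proof. eapply Rle_trans; [apply Rmax_r|apply Rmax_Cmod]. Qed.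

Lemma series_cv_R (a : nat -> R) : ex_series a ->
  forall e, 0 < e -> exists N0, forall N, le N0 N -> Rabs (sum_n a N - Series a) < e.
Proof.
intros hex e he. pose proof (Series_correct a hex) as H.
destruct (H (ball (Series a) (mkposreal e he)) (locally_ball _ _)) as [N0 HN].
exists N0. intros N hN. specialize (HN N hN). exact HN.
Qed.

Lemma cseries_cv (u : nat -> C) (b : nat -> R) :
  (forall k, Cmod (u k) <= b k) -> ex_series b -> cvC (fun N => sum_n u N) (CSeries u).
Proof.
intros hb hex.
assert (h1 : ex_series (fun k => Re (u k))).
{ apply (ex_series_le (K := R_AbsRing) (V := R_CompleteNormedModule) _ b); [|exact hex].
  intros k. eapply Rle_trans; [apply re_le_Cmod|apply hb]. }
assert (h2 : ex_series (fun k => Im (u k))).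
{ apply (ex_series_le (K := R_AbsRing) (V := R_CompleteNormedModule) _ b); [|exact hex].
  intros k. eapply Rle_trans; [apply im_le_Cmod|apply hb]. }
intros e he.
destruct (series_cv_R _ h1 (e/2)) as [N1 H1]; [lra|].
destruct (series_cv_R _ h2 (e/2)) as [N2 H2]; [lra|].
exists (Nat.max N1 N2). intros N hN.
eapply Rle_lt_trans; [apply Cmod_le_sum|].
specialize (H1 N ltac:(lia)). specialize (H2 N ltac:(lia)).
change (Re (Cminus (sum_n u N) (CSeries u))) with (fst (sum_n u N) - Series (fun k => Re (u k))).
change (Im (Cminus (sum_n u N) (CSeries u))) with (snd (sum_n u N) - Series (fun k => Im (u k))).
rewrite fst_sum_n snd_sum_n. unfold Re, Im in *. lra.
Qed.

Lemma cvC_mult (u v : nat -> C) (A B : C) (Kb : R) :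
  cvC u A -> cvC v B -> (forall N, Cmod (v N) <= Kb) -> cvC (fun N => Cmult (u N) (v N)) (Cmult A B).
Proof.
intros hu hv hK e he.
assert (hK0 : 0 <= Kb) by (eapply Rle_trans; [apply Cmod_ge_0|apply (hK O)]).
destruct (hu (e / (2 * (Kb + 1)))) as [N1 H1].
{ apply Rdiv_lt_0_compat; lra. }
destruct (hv (e / (2 * (Cmod A + 1)))) as [N2 H2].
{ pose proof (Cmod_ge_0 A). apply Rdiv_lt_0_compat; lra. }
exists (Nat.max N1 N2). intros N hN.
specialize (H1 N ltac:(lia)). specialize (H2 N ltac:(lia)).
replace (Cminus (Cmult (u N) (v N)) (Cmult A B)) with
  (Cplus (Cmult (Cminus (u N) A) (v N)) (Cmult A (Cminus (v N) B))) by field.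
eapply Rle_lt_trans; [apply Cmod_triangle|]. rewrite !Cmod_mult.
pose proof (hK N). pose proof (Cmod_ge_0 A). pose proof (Cmod_ge_0 (Cminus (u N) A)).
pose proof (Cmod_ge_0 (Cminus (v N) B)). pose proof (Cmod_ge_0 (v N)).
assert (Cmod (Cminus (u N) A) * Cmod (v N) <= e / (2 * (Kb + 1)) * Kb).
{ apply Rmult_le_compat; lra. }
assert (Cmod A * Cmod (Cminus (v N) B) <= Cmod A * (e / (2 * (Cmod A + 1)))).
{ apply Rmult_le_compat_l; lra. }
assert (e / (2 * (Kb + 1)) * Kb < e / 2).
{ apply (Rmult_lt_reg_r (2 * (Kb + 1))); [lra|]. field_simplify; nra. }
assert (Cmod A * (e / (2 * (Cmod A + 1))) < e / 2).
{ apply (Rmult_lt_reg_r (2 * (Cmod A + 1))); [lra|]. field_simplify; nra. }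
lra.
Qed.

Lemma C_eq_eps (x y : C) : (forall e, 0 < e -> Cmod (Cminus x y) < e) -> x = y.
Proof.
intros H. assert (Cmod (Cminus x y) = 0).
{ destruct (Cmod_ge_0 (Cminus x y)) as [h|h]; [|lra].
  specialize (H _ h). lra. }
apply Cmod_eq_0 in H0. replace x with (Cplus (Cminus x y) y) by field. rewrite H0. field.
Qed.

Lemma mobius_abs n : Rabs (mobius n) <= 1.
Proof.
unfold mobius. case: ifP => _. rewrite Rabs_R0; lra.
case: ifP => _. rewrite pow_1_abs; lra. rewrite Rabs_R0; lra.
Qed.

Definition zterm (z : C) (k : nat) : C := cpowR (ns k) (Copp z).
Definition aterm (z : C) (k : nat) : C := Cmult (RtoC (mobius (S k))) (cpowR (ns k) (Copp z)).
Definition Aser (z : C) : C := CSeries (aterm z).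

Lemma zeta_CSeries z : zeta z = CSeries (zterm z).
Proof. reflexivity. Qed.

Lemma Cmod_zterm z k : Cmod (zterm z k) = Rpower (ns k) (- Re z).
Proof. unfold zterm. rewrite Cmod_cpowR. reflexivity. Qed.

Lemma Cmod_aterm z k : Cmod (aterm z k) <= Rpower (ns k) (- Re z).
Proof.
unfold aterm. rewrite Cmod_mult Cmod_cpowR Cmod_R.
pose proof (mobius_abs (S k)). pose proof (exp_pos (Re (Copp z) * ln (ns k))).
unfold Rpower. change (Re (Copp z)) with (- Re z) in *.
pose proof (Rabs_pos (mobius (S k))). nra.
Qed.

Lemma cv_zeta z : 1 < Re z -> cvC (fun N => sum_n (zterm z) N) (zeta z).
Proof.
intros hz. rewrite zeta_CSeries. refine (cseries_cv _ (fun k => Rpower (ns k) (- Re z)) _ _).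
- intros k; rewrite Cmod_zterm; lra.
- apply ex_pser_R; exact hz.
Qed.

Lemma cv_Aser z : 1 < Re z -> cvC (fun N => sum_n (aterm z) N) (Aser z).
Proof.
intros hz. refine (cseries_cv _ (fun k => Rpower (ns k) (- Re z)) _ _).
- intros k; apply Cmod_aterm.
- apply ex_pser_R; exact hz.
Qed.

Lemma zeta_partial_bound z N : 1 < Re z -> Cmod (sum_n (zterm z) N) <= Bt (Re z).
Proof.
intros hz. eapply Rle_trans; [apply Cmod_sum_n|].
rewrite (sum_n_ext _ (fun k => Rpower (ns k) (- Re z))); [|intros; apply Cmod_zterm].
apply psum_Bt; exact hz.
Qed.


Lemma exists_ns (x : R) : exists N, x < ns N.
Proof.
destruct (archimed x) as [h1 h2].
exists (Z.to_nat (up x)). unfold ns. rewrite S_INR.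
destruct (Z_le_gt_dec (up x) 0) as [h|h].
- assert (Z.to_nat (up x) = 0%nat) as -> by lia. simpl. apply IZR_le in h. lra.
- rewrite INR_IZR_INZ Z2Nat.id; [lra|lia].
Qed.

Lemma ns_mono (N M : nat) : le N M -> ns N <= ns M.
Proof. intros h. unfold ns. apply le_INR. lia. Qed.

Lemma ns_mul i j : ns i * ns j = INR (S i * S j)%N.
Proof. unfold ns. rewrite <- mult_INR. reflexivity. Qed.

Lemma aterm_zterm z i j :
  Cmult (aterm z i) (zterm z j) = Cmult (RtoC (mobius (S i))) (cpowR (INR (S i * S j)%N) (Copp z)).
Proof.
unfold aterm, zterm. rewrite -ns_mul cpowR_mul; try apply ns_pos. field.
Qed.

Lemma prod_double (u v : nat -> C) N :
  Cmult (sum_n u N) (sum_n v N) = sum_n (fun i => sum_n (fun j => Cmult (u i) (v j)) N) N.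
Proof.
rewrite Cmult_sum_n_r. apply sum_n_ext. intros i. rewrite Cmult_sum_n_l. reflexivity.
Qed.

Lemma sum_n_split2 (W : nat -> nat -> C) (c : nat -> nat -> bool) N :
  sum_n (fun i => sum_n (fun j => W i j) N) N =
  Cplus (sum_n (fun i => sum_n (fun j => if c i j then W i j else zero) N) N)
        (sum_n (fun i => sum_n (fun j => if c i j then zero else W i j) N) N).
Proof.
change (Cplus ?a ?b) with (plus a b). rewrite -sum_n_plus. apply sum_n_ext. intros i.
rewrite -sum_n_plus. apply sum_n_ext. intros j. destruct (c i j).
- symmetry. apply plus_zero_r.
- symmetry. apply plus_zero_l.
Qed.

Lemma Cmod_double (W : nat -> nat -> C) N :
  Cmod (sum_n (fun i => sum_n (fun j => W i j) N) N) <= sum_n (fun i => sum_n (fun j => Cmod (W i j)) N) N.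
Proof.
eapply Rle_trans; [apply Cmod_sum_n|]. apply sum_n_le. intros i. apply Cmod_sum_n.
Qed.

Lemma Cplus1_minus (X : C) : Cminus (Cplus (RtoC 1) X) (RtoC 1) = X.
Proof. field. Qed.

Lemma key_B z N : 1 < Re z ->
  Cmod (Cminus (Cmult (sum_n (aterm z) N) (sum_n (zterm z) N)) (RtoC 1))
  <= Rpower (/ ns N) (Re z - (1 + Re z) / 2) * (Bt ((1 + Re z) / 2) * Bt ((1 + Re z) / 2)).
Proof.
intros hz.
rewrite prod_double.
rewrite (sum_n_ext _ (fun i => sum_n (fun j => Cmult (RtoC (mobius (S i))) (cpowR (INR (S i * S j)%N) (Copp z))) N)).
2:{ intros i; apply sum_n_ext; intros j; apply aterm_zterm. }
rewrite (sum_n_split2 _ (fun i j => (S i * S j <= S N)%N)).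
rewrite (Kcomb (fun k => cpowR (INR k) (Copp z))).
change (INR 1%N) with 1. rewrite cpowR_1.
rewrite Cplus1_minus.
eapply Rle_trans; [apply Cmod_double|].
eapply Rle_trans; [|apply (rankin (/ ns N) (Re z) ((1 + Re z) / 2) N)].
2:{ apply Rinv_0_lt_compat, ns_pos. }
2:{ lra. }
2:{ lra. }
apply sum_n_le; intro i. apply sum_n_le; intro j.
case: ifP => hc.
- rewrite Cmod_0. destruct (Rle_dec _ _); left; apply Rpower_pos.
- destruct (Rle_dec (/ ns N) (/ (ns i * ns j))) as [h|h].
  + exfalso. move: hc => /negP; apply.
    assert (ns i * ns j <= ns N).
    { rewrite -(Rinv_inv (ns i * ns j)) -(Rinv_inv (ns N)). apply Rinv_le_contravar; [apply Rinv_0_lt_compat, ns_pos|exact h]. }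
    rewrite ns_mul in H. unfold ns in H. apply INR_le in H. apply/leP. exact H.
  + rewrite Cmod_mult Cmod_cpowR Cmod_R -ns_mul.
    pose proof (mobius_abs (S i)). pose proof (Rabs_pos (mobius (S i))).
    pose proof (exp_pos (Re (Copp z) * ln (ns i * ns j))).
    unfold Rpower. change (Re (Copp z)) with (- Re z) in *. unfold is_left; cbv iota beta. nra.
Qed.

Theorem Aser_zeta z : 1 < Re z -> Cmult (Aser z) (zeta z) = RtoC 1.
Proof.
intros hz.
set t := (1 + Re z) / 2.
set B2 := Bt t * Bt t.
assert (hB2 : 0 <= B2).
{ unfold B2, Bt, t. apply Rle_0_sqr. }
pose proof (cvC_mult _ _ _ _ _ (cv_Aser z hz) (cv_zeta z hz) (fun N => zeta_partial_bound z N hz)) as hcv.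
apply C_eq_eps. intros e he.
destruct (Rpower_small (Re z - t) (e / (2 * (B2 + 1)))) as [del [hdel Hdel]].
{ unfold t; lra. }
{ apply Rdiv_lt_0_compat; lra. }
destruct (exists_ns (/ del)) as [N1 HN1].
destruct (hcv (e / 2)) as [N2 HN2]; [lra|].
set N := Nat.max N1 N2.
specialize (HN2 N ltac:(unfold N; lia)).
pose proof (key_B z N hz) as hk. fold t B2 in hk.
assert (hsmall : Rpower (/ ns N) (Re z - t) < e / (2 * (B2 + 1))).
{ apply Hdel. split. apply Rinv_0_lt_compat, ns_pos.
  pose proof (ns_mono N1 N ltac:(unfold N; lia)).
  assert (/ del < ns N) by lra.
  rewrite <- (Rinv_inv del). apply Rinv_lt_contravar; [|exact H0].
  apply Rmult_lt_0_compat; [apply Rinv_0_lt_compat; exact hdel|apply ns_pos]. }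
assert (Rpower (/ ns N) (Re z - t) * B2 <= e / (2 * (B2 + 1)) * B2).
{ apply Rmult_le_compat_r; lra. }
assert (e / (2 * (B2 + 1)) * B2 < e / 2).
{ apply (Rmult_lt_reg_r (2 * (B2 + 1))); [lra|]. field_simplify; nra. }
replace (Cminus (Cmult (Aser z) (zeta z)) (RtoC 1)) with
  (Cplus (Cminus (Cmult (Aser z) (zeta z)) (Cmult (sum_n (aterm z) N) (sum_n (zterm z) N)))
         (Cminus (Cmult (sum_n (aterm z) N) (sum_n (zterm z) N)) (RtoC 1))) by field.
eapply Rle_lt_trans; [apply Cmod_triangle|].
assert (Cmod (Cminus (Cmult (Aser z) (zeta z)) (Cmult (sum_n (aterm z) N) (sum_n (zterm z) N)))
        = Cmod (Cminus (Cmult (sum_n (aterm z) N) (sum_n (zterm z) N)) (Cmult (Aser z) (zeta z)))).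
{ rewrite <- Cmod_opp. f_equal. field. }
rewrite H1. lra.
Qed.


Definition indf (b u : R) : R := if Rle_dec u b then 1 else 0.

Definition cst (eps : R) : R := Series (fun k => mobius (S k) * Rpower (ns k) (- (1 + eps))).

Definition gfun (eps : R) (N : nat) (u : R) : R :=
  sum_n (fun i => sum_n (fun j => mobius (S i) * Rpower (ns i) (- eps) * indf (/ (ns i * ns j)) u) N) N.

Lemma count_nat (k N : nat) :
  sum_n (fun j => if (S j <= k)%N then 1 else 0) N = INR (Nat.min k (S N)).
Proof.
induction N as [|N IH].
- rewrite sum_O. case: ifP => h.
  + assert (Nat.min k 1 = 1%nat) as -> by lia. reflexivity.
  + assert (Nat.min k 1 = 0%nat) as -> by lia. reflexivity.
- rewrite sum_Sn IH. change (plus ?a ?b) with (a + b). case: ifP => h.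
  + assert (Nat.min k (S N) = S N) as -> by lia. assert (Nat.min k (S (S N)) = S (S N)) as -> by lia.
    rewrite (S_INR (S N)). reflexivity.
  + assert (Nat.min k (S N) = Nat.min k (S (S N))) as -> by lia. apply Rplus_0_r.
Qed.

Lemma le_inv_swap a b u : 0 < a -> 0 < b -> 0 < u -> (u <= / (a * b) <-> b <= / (a * u)).
Proof.
intros ha hb hu. split; intro h.
- assert (u * (a * b) <= 1).
  { apply (Rmult_le_compat_r (a * b)) in h; [|nra]. rewrite Rinv_l in h; nra. }
  apply Rle_trans with ((u * (a * b)) * / (a * u)); [right; field; lra|].
  apply Rle_trans with (1 * / (a * u)); [|right; ring].
  apply Rmult_le_compat_r; [left; apply Rinv_0_lt_compat; nra|lra].
- assert (b * (a * u) <= 1).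
  { apply (Rmult_le_compat_r (a * u)) in h; [|nra]. rewrite Rinv_l in h; nra. }
  apply Rle_trans with ((b * (a * u)) * / (a * b)); [right; field; lra|].
  apply Rle_trans with (1 * / (a * b)); [|right; ring].
  apply Rmult_le_compat_r; [left; apply Rinv_0_lt_compat; nra|lra].
Qed.

Lemma Int_part_small y : 0 < y < 1 -> Int_part y = 0%Z.
Proof. intros h. symmetry. apply Int_part_spec. simpl. lra. Qed.

Lemma count_int i N u : 0 < u -> / u <= ns N ->
  IZR (Int_part (/ (ns i * u))) = sum_n (fun j => indf (/ (ns i * ns j)) u) N.
Proof.
intros hu huN.
pose proof (ns_pos i) as hni. pose proof (ns_ge1 i) as hni1.
set y := / (ns i * u).
assert (hy : 0 < y) by (apply Rinv_0_lt_compat; nra).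
assert (hyu : y <= / u).
{ apply Rinv_le_contravar; [lra|]. nra. }
set K := Int_part y.
destruct (base_Int_part y) as [h1 h2]. fold K in h1, h2.
assert (hK : (0 <= K)%Z).
{ assert (IZR (-1) < IZR K) by (simpl; lra). apply lt_IZR in H. lia. }
set k := Z.to_nat K.
assert (hk : IZR K = INR k) by (unfold k; rewrite INR_IZR_INZ Z2Nat.id; [reflexivity|lia]).
rewrite hk.
rewrite (sum_n_ext _ (fun j => if (S j <= k)%N then 1 else 0)).
- rewrite count_nat.
  assert (le k (S N)).
  { apply INR_le. rewrite <- hk. change (INR (S N)) with (ns N). lra. }
  f_equal. lia.
- intro j. unfold indf. pose proof (ns_pos j). destruct (Rle_dec u (/ (ns i * ns j))) as [h|h]; case: ifP => hj.
  + reflexivity.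
  + exfalso. apply le_inv_swap in h; try lra. fold y in h.
    rewrite hk in h2.
    assert (INR (S j) < INR (k + 1)) by (rewrite plus_INR; change (INR (S j)) with (ns j); change (INR 1) with 1; lra).
    apply INR_lt in H0. move: hj => /negP; apply. apply/leP. lia.
  + exfalso. apply h. apply le_inv_swap; try lra. fold y.
    assert (le (S j) k) by (apply/leP; exact hj).
    apply le_INR in H0. change (INR (S j)) with (ns j) in H0. lra.
  + reflexivity.
Qed.

Lemma sum_n_stable (h : nat -> R) N n : (forall k, lt N k -> h k = 0) -> le N n -> sum_n h n = sum_n h N.
Proof.
intros hz hn. induction n as [|n IH].
- assert (N = O) by lia. subst. reflexivity.
- destruct (Nat.eq_dec N (S n)) as [->|ne]; [reflexivity|].
  rewrite sum_Sn IH; [|lia]. rewrite hz; [|lia]. apply: (plus_zero_r (G := R_AbelianMonoid)).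
Qed.

Lemma is_series_fin (h : nat -> R) N : (forall k, lt N k -> h k = 0) -> is_series h (sum_n h N).
Proof.
intros hz. unfold is_series.
apply filterlim_ext_loc with (fun _ => sum_n h N).
- exists N. intros n hn. symmetry. apply sum_n_stable; [exact hz|lia].
- apply filterlim_const.
Qed.

Lemma ex_series_cst eps : 0 < eps -> ex_series (fun k => mobius (S k) * Rpower (ns k) (- (1 + eps))).
Proof.
intros he. apply (ex_series_le (K := R_AbsRing) (V := R_CompleteNormedModule) _ (fun k => Rpower (ns k) (- (1 + eps)))).
- intros k. change (norm ?x) with (Rabs x). rewrite Rabs_mult (Rabs_right (Rpower _ _)); [|left; apply Rpower_pos].
  pose proof (mobius_abs (S k)). pose proof (Rpower_pos (ns k) (- (1 + eps))). nra.
- apply ex_pser_R. lra.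
Qed.

Lemma f_eps_decomp eps N u : 0 < eps -> 0 < u -> / u <= ns N ->
  f_eps eps u = cst eps / u - gfun eps N u.
Proof.
intros he hu huN.
unfold f_eps. apply is_series_unique.
set h := fun k => mobius (S k) * Rpower (ns k) (- eps) * IZR (Int_part (/ (ns k * u))).
assert (H1 : is_series (fun k => mobius (S k) * Rpower (ns k) (- (1 + eps)) * / u) (cst eps * / u)).
{ apply is_series_scal_r. apply Series_correct. apply ex_series_cst; exact he. }
assert (H2 : is_series h (gfun eps N u)).
{ replace (gfun eps N u) with (sum_n h N).
  - apply is_series_fin. intros k hk. unfold h.
    rewrite Int_part_small. simpl; ring.
    pose proof (ns_pos k).
    assert (ns N < ns k) by (unfold ns; apply lt_INR; lia).
    split. apply Rinv_0_lt_compat; nra.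
    rewrite <- Rinv_1. apply Rinv_lt_contravar; [nra|].
    apply (Rmult_le_compat_r u) in huN; [|lra]. rewrite Rinv_l in huN; nra.
  - unfold gfun, h. apply sum_n_ext. intros i.
    rewrite (count_int i N u hu huN).
    rewrite <- (sum_n_mult_l (K := R_Ring)). reflexivity. }
pose proof (is_series_minus _ _ _ _ H1 H2) as H3.
eapply is_series_ext; [|exact H3].
intros k. unfold h. change (INR (S k)) with (ns k).
unfold plus, opp; simpl. unfold frac_part.
pose proof (ns_pos k).
unfold Rpower.
replace (- eps * ln (ns k)) with (- (eps * ln (ns k))) by ring.
replace (- (1 + eps) * ln (ns k)) with (- (eps * ln (ns k)) + - ln (ns k)) by ring.
rewrite exp_plus !exp_Ropp exp_ln //.
pose proof (exp_pos (eps * ln (ns k))).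
field. repeat split; lra.
Qed.


Lemma scal_C (k : R) (z : C) : @scal R_Ring C_R_ModuleSpace k z = Cmult (RtoC k) z.
Proof. destruct z as [x y]. apply injective_projections; simpl.
  - change (k * x = k * x - 0 * y). ring.
  - change (k * y = k * y + 0 * x). ring. Qed.

Ltac Cfield := match goal with |- @eq _ ?x ?y => change (@eq C x y) end; field.

Lemma plus_C (x y : C) : @plus (NormedModule.AbelianMonoid R_AbsRing C_R_NormedModule) x y = Cplus x y.
Proof. reflexivity. Qed.

Lemma scal_C' (k : R) (z : C) : @scal R_Ring (NormedModule.ModuleSpace R_AbsRing C_R_NormedModule) k z = Cmult (RtoC k) z.
Proof. apply scal_C. Qed.

Lemma Cmult1_r (w : C) : w = Cmult (RtoC 1) w.
Proof. field. Qed.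
Lemma Cmult0_r (w : C) : RtoC 0 = Cmult (RtoC 0) w.
Proof. field. Qed.

Lemma is_RInt_eq {V : NormedModule R_AbsRing} (f : R -> V) a b l l' :
  is_RInt f a b l -> l = l' -> is_RInt f a b l'.
Proof. intros h ->; exact h. Qed.

Definition Ival (s : C) (a b : R) : C :=
  if Rle_dec a b then Cdiv (Cminus (cpowR b s) (cpowR a s)) s else RtoC 0.

Lemma is_RInt_ind s a b : 0 < a -> a <= 1 -> 0 < b -> b <= 1 -> s <> RtoC 0 ->
  is_RInt (V := C_R_NormedModule) (fun u => Cmult (RtoC (indf b u)) (cpowR u (Cminus s (RtoC 1)))) a 1 (Ival s a b).
Proof.
intros ha ha1 hb hb1 hs. unfold Ival.
destruct (Rle_dec a b) as [hab|hab]; cbn [is_left].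
- eapply (is_RInt_eq (V := C_R_NormedModule)).
  + apply (is_RInt_Chasles (V := C_R_NormedModule) _ a b 1).
    * apply is_RInt_ext with (fun u => cpowR u (Cminus s (RtoC 1))).
      { intros x hx. rewrite Rmin_left in hx; [|lra]. rewrite Rmax_right in hx; [|lra].
        unfold indf. destruct (Rle_dec x b); [|lra]. apply: Cmult1_r. }
      exact (is_RInt_cpow s a b ha hb hs).
    * apply is_RInt_ext with (fun _ => RtoC 0 : C_R_NormedModule).
      { intros x hx. rewrite Rmin_left in hx; [|lra]. rewrite Rmax_right in hx; [|lra].
        unfold indf. destruct (Rle_dec x b); [lra|]. apply: Cmult0_r. }
      apply is_RInt_const.
  + rewrite plus_C scal_C'. Cfield. exact hs.
- eapply (is_RInt_eq (V := C_R_NormedModule)).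
  + apply is_RInt_ext with (fun _ => RtoC 0 : C_R_NormedModule).
    { intros x hx. rewrite Rmin_left in hx; [|lra]. rewrite Rmax_right in hx; [|lra].
      unfold indf. destruct (Rle_dec x b); [lra|]. apply: Cmult0_r. }
    apply is_RInt_const.
  + rewrite scal_C'. Cfield.
Qed.

Lemma is_RInt_sum_n (F : nat -> R -> C) (L : nat -> C) a b N :
  (forall i, is_RInt (V := C_R_NormedModule) (F i) a b (L i)) ->
  is_RInt (V := C_R_NormedModule) (fun u => sum_n (fun i => F i u) N) a b (sum_n L N).
Proof.
intros H. induction N as [|N IH].
- rewrite sum_O. apply is_RInt_ext with (F O); [intros; rewrite sum_O; reflexivity|apply H].
- rewrite sum_Sn. apply is_RInt_ext with (fun u => plus (sum_n (fun i => F i u) N) (F (S N) u)).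
  + intros x _. rewrite sum_Sn. reflexivity.
  + apply: is_RInt_plus; [exact IH | apply H].
Qed.

Lemma is_RInt_g eps s N a : 0 < a -> a <= 1 -> s <> RtoC 0 ->
  is_RInt (V := C_R_NormedModule) (fun u => Cmult (RtoC (gfun eps N u)) (cpowR u (Cminus s (RtoC 1)))) a 1
    (sum_n (fun i => sum_n (fun j => Cmult (RtoC (mobius (S i) * Rpower (ns i) (- eps))) (Ival s a (/ (ns i * ns j)))) N) N).
Proof.
intros ha ha1 hs.
apply is_RInt_ext with (fun u => @sum_n C_AbelianMonoid (fun i => @sum_n C_AbelianMonoid (fun j =>
   scal (mobius (S i) * Rpower (ns i) (- eps)) (Cmult (RtoC (indf (/ (ns i * ns j)) u)) (cpowR u (Cminus s (RtoC 1))))) N) N).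
- intros x _. unfold gfun. rewrite RtoC_sum_n Cmult_sum_n_r. apply: sum_n_ext. intros i.
  rewrite RtoC_sum_n Cmult_sum_n_r. apply: sum_n_ext. intros j.
  rewrite scal_C. rewrite !RtoC_mult. Cfield.
- apply is_RInt_sum_n. intros i. apply is_RInt_sum_n. intros j.
  rewrite -scal_C. apply: is_RInt_scal.
  pose proof (ns_pos i); pose proof (ns_pos j); pose proof (ns_ge1 i); pose proof (ns_ge1 j).
  apply is_RInt_ind; try lra; try exact hs.
  + apply Rinv_0_lt_compat; nra.
  + rewrite <- Rinv_1. apply Rinv_le_contravar; nra.
Qed.

Lemma is_RInt_c eps s a : 0 < a -> 1 < Re s ->
  is_RInt (V := C_R_NormedModule) (fun u => Cmult (RtoC (cst eps / u)) (cpowR u (Cminus s (RtoC 1)))) a 1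
    (Cmult (RtoC (cst eps)) (Cdiv (Cminus (RtoC 1) (cpowR a (Cminus s (RtoC 1)))) (Cminus s (RtoC 1)))).
Proof.
intros ha hs.
assert (hs1 : Cminus s (RtoC 1) <> RtoC 0).
{ intro h. apply (f_equal Re) in h. unfold Re, Cminus, Cplus, Copp, RtoC in h; simpl in h. unfold Re in hs. lra. }
apply is_RInt_ext with (fun u => scal (cst eps) (cpowR u (Cminus (Cminus s (RtoC 1)) (RtoC 1)))).
- intros x hx. assert (0 < x).
  { destruct hx as [hx _]. eapply Rle_lt_trans; [|exact hx]. apply Rmin_glb; lra. }
  rewrite scal_C cpowR_m1 //. unfold Rdiv. rewrite RtoC_mult. Cfield.
- eapply (is_RInt_eq (V := C_R_NormedModule)).
  + apply: is_RInt_scal. exact (is_RInt_cpow (Cminus s (RtoC 1)) a 1 ha Rlt_0_1 hs1).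
  + rewrite scal_C' cpowR_1. reflexivity.
Qed.


Lemma Cinv_of (A Z : C) : Cmult A Z = RtoC 1 -> Cinv Z = A.
Proof.
intros H. assert (hZ : Z <> RtoC 0).
{ intro h. rewrite h in H. apply (f_equal fst) in H. simpl in H. lra. }
rewrite <- (Cmult_1_r (Cinv Z)). rewrite <- H. field. exact hZ.
Qed.

Lemma Series_zero : Series (fun _ => 0) = 0.
Proof.
apply is_series_unique. pose proof (is_series_fin (fun _ : nat => 0) O (fun _ _ => Logic.eq_refl)) as H.
rewrite sum_O in H. exact H.
Qed.

Lemma Aser_real eps : Aser (RtoC (1 + eps)) = RtoC (cst eps).
Proof.
unfold Aser, CSeries, cst, RtoC. f_equal.
- apply Series_ext. intros k. unfold aterm, cpowR, Cmult, Re, Im, Rpower; simpl.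
  replace (- 0 * ln (ns k)) with 0 by ring. rewrite cos_0 sin_0. ring.
- transitivity (Series (fun _ => 0)); [|apply Series_zero].
  apply Series_ext. intros k. unfold aterm, cpowR, Cmult, Re, Im; simpl.
  replace (- 0 * ln (ns k)) with 0 by ring. rewrite cos_0 sin_0. ring.
Qed.

Lemma cpowR_inv x z : 0 < x -> cpowR (/ x) z = cpowR x (Copp z).
Proof.
intros hx. destruct z as [p q]. unfold cpowR, Re, Im; simpl. rewrite ln_Rinv //.
replace (p * - ln x) with (- p * ln x) by ring. replace (q * - ln x) with (- q * ln x) by ring.
reflexivity.
Qed.

Lemma aterm_shift s eps i : 0 < eps ->
  aterm (Cplus s (RtoC eps)) i = Cmult (RtoC (mobius (S i) * Rpower (ns i) (- eps))) (cpowR (ns i) (Copp s)).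
Proof.
intros he. unfold aterm.
replace (Copp (Cplus s (RtoC eps))) with (Cplus (Copp s) (RtoC (- eps))).
2:{ apply injective_projections; simpl; ring. }
rewrite cpowR_add cpowR_R RtoC_mult. field.
Qed.

Lemma Cminus_sum_n (u v : nat -> C) N : Cminus (sum_n u N) (sum_n v N) = sum_n (fun k => Cminus (u k) (v k)) N.
Proof.
induction N as [|N IH].
- rewrite !sum_O. reflexivity.
- rewrite !sum_Sn -IH. change (plus ?a ?b) with (Cplus a b). field.
Qed.

Lemma kcoef_bound eps i : 0 < eps -> Rabs (mobius (S i) * Rpower (ns i) (- eps)) <= 1.
Proof.
intros he. rewrite Rabs_mult (Rabs_right (Rpower _ _)); [|left; apply Rpower_pos].
pose proof (mobius_abs (S i)). pose proof (Rabs_pos (mobius (S i))).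
assert (Rpower (ns i) (- eps) <= 1).
{ unfold Rpower. rewrite <- exp_0. apply exp_le_mono.
  assert (0 <= ln (ns i)) by (rewrite <- ln_1; apply ln_le; [lra|apply ns_ge1]). nra. }
pose proof (Rpower_pos (ns i) (- eps)). nra.
Qed.

Lemma est_V eps s a N : 0 < eps -> 0 < a -> 1 < Re s ->
  Cmod (Cminus (Cmult s (sum_n (fun i => sum_n (fun j => Cmult (RtoC (mobius (S i) * Rpower (ns i) (- eps))) (Ival s a (/ (ns i * ns j)))) N) N))
               (Cmult (sum_n (aterm (Cplus s (RtoC eps))) N) (sum_n (zterm s) N)))
  <= Rpower a (Re s - (1 + Re s) / 2) * (Bt ((1 + Re s) / 2) * Bt ((1 + Re s) / 2)).
Proof.
intros he ha hs.
assert (hs0 : s <> RtoC 0).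
{ intro h. rewrite h in hs. unfold Re, RtoC in hs; simpl in hs. lra. }
rewrite prod_double Cmult_sum_n_l.
rewrite (sum_n_ext (fun k => Cmult s _) (fun i => sum_n (fun j => Cmult s (Cmult (RtoC (mobius (S i) * Rpower (ns i) (- eps))) (Ival s a (/ (ns i * ns j))))) N)).
2:{ intros i. rewrite Cmult_sum_n_l. reflexivity. }
rewrite Cminus_sum_n.
rewrite (sum_n_ext (fun k => Cminus _ _) (fun i => sum_n (fun j => Cminus (Cmult s (Cmult (RtoC (mobius (S i) * Rpower (ns i) (- eps))) (Ival s a (/ (ns i * ns j))))) (Cmult (aterm (Cplus s (RtoC eps)) i) (zterm s j))) N)).
2:{ intros i. rewrite Cminus_sum_n. reflexivity. }
eapply Rle_trans; [apply Cmod_double|].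
eapply Rle_trans; [|apply (rankin a (Re s) ((1 + Re s) / 2) N ha); lra].
apply sum_n_le; intro i. apply sum_n_le; intro j.
pose proof (ns_pos i) as hni. pose proof (ns_pos j) as hnj.
assert (hnm : 0 < ns i * ns j) by nra.
set k := mobius (S i) * Rpower (ns i) (- eps).
pose proof (kcoef_bound eps i he) as hk. fold k in hk.
rewrite aterm_shift //. fold k.
assert (hprod : Cmult (Cmult (RtoC k) (cpowR (ns i) (Copp s))) (zterm s j) = Cmult (RtoC k) (cpowR (/ (ns i * ns j)) s)).
{ unfold zterm. rewrite cpowR_inv // cpowR_mul //. field. }
rewrite hprod. unfold Ival.
destruct (Rle_dec a (/ (ns i * ns j))) as [h|h]; cbn [is_left].
- replace (Cminus (Cmult s (Cmult (RtoC k) (Cdiv (Cminus (cpowR (/ (ns i * ns j)) s) (cpowR a s)) s))) (Cmult (RtoC k) (cpowR (/ (ns i * ns j)) s)))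
    with (Copp (Cmult (RtoC k) (cpowR a s))) by (field; exact hs0).
  rewrite Cmod_opp Cmod_mult Cmod_R Cmod_cpowR.
  pose proof (exp_pos (Re s * ln a)). pose proof (Rabs_pos k).
  unfold Rpower. nra.
- replace (Cminus (Cmult s (Cmult (RtoC k) (RtoC 0))) (Cmult (RtoC k) (cpowR (/ (ns i * ns j)) s)))
    with (Copp (Cmult (RtoC k) (cpowR (/ (ns i * ns j)) s))) by field.
  rewrite Cmod_opp Cmod_mult Cmod_R Cmod_cpowR ln_Rinv //.
  pose proof (exp_pos (Re s * - ln (ns i * ns j))). pose proof (Rabs_pos k).
  unfold Rpower. replace (- Re s * ln (ns i * ns j)) with (Re s * - ln (ns i * ns j)) by ring. nra.
Qed.


Lemma ball_C (L z : C) (e : R) : Cmod (Cminus z L) < e -> ball (M := NormedModule.UniformSpace R_AbsRing C_R_NormedModule) L e z.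
Proof.
intros h. apply norm_compat1.
change (norm (minus z L)) with (sqrt (Rabs (fst (Cminus z L)) ^ 2 + Rabs (snd (Cminus z L)) ^ 2)).
rewrite !pow2_abs. exact h.
Qed.

Theorem mainTheorem4 (eps : R) (s : C) :
  0 < eps -> 1 < Re s ->
  is_RInt_gen (V := C_R_NormedModule)
    (fun u : R => Cmult (RtoC (f_eps eps u)) (cpowR u (Cminus s (RtoC 1))))
    (at_right 0) (at_point 1)
    (Cminus
       (Cmult (Cinv (zeta (RtoC (1 + eps)))) (Cinv (Cminus s (RtoC 1))))
       (Cmult (Cmult (Cinv (zeta (Cplus s (RtoC eps)))) (zeta s)) (Cinv s))).
Proof.
intros he hs.
assert (hs0 : s <> RtoC 0).
{ intro h. rewrite h in hs. unfold Re, RtoC in hs; simpl in hs. lra. }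
assert (hs1 : Cminus s (RtoC 1) <> RtoC 0).
{ intro h. apply (f_equal Re) in h. unfold Re, Cminus, Cplus, Copp, RtoC in h; simpl in h. unfold Re in hs. lra. }
assert (hz1 : Cinv (zeta (RtoC (1 + eps))) = RtoC (cst eps)).
{ rewrite -Aser_real. apply Cinv_of. apply Aser_zeta. unfold Re, RtoC; simpl. lra. }
assert (hse : 1 < Re (Cplus s (RtoC eps))).
{ unfold Re, Cplus, RtoC in *; simpl. lra. }
assert (hz2 : Cinv (zeta (Cplus s (RtoC eps))) = Aser (Cplus s (RtoC eps))).
{ apply Cinv_of, Aser_zeta. exact hse. }
rewrite hz1 hz2.
set c := cst eps.
set w := Cminus s (RtoC 1).
set AZ := Cmult (Aser (Cplus s (RtoC eps))) (zeta s).
set L := Cminus (Cmult (RtoC c) (Cinv w)) (Cmult AZ (Cinv s)).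
set t := (1 + Re s) / 2.
set B2 := Bt t * Bt t.
assert (hB2 : 0 <= B2) by (unfold B2; apply Rle_0_sqr).
pose proof (cvC_mult _ _ _ _ _ (cv_Aser _ hse) (cv_zeta s hs) (fun N => zeta_partial_bound s N hs)) as hcv.
fold AZ in hcv.
assert (hCs : 0 < Cmod s) by (apply Cmod_gt_0; exact hs0).
assert (hCw : 0 < Cmod w) by (apply Cmod_gt_0; exact hs1).
set cabs := Rabs c.
assert (hcabs : 0 <= cabs) by apply Rabs_pos.
intros P [e0 HP].
set e := pos e0.
assert (he0 : 0 < e) by (apply cond_pos).
set eta1 := e * Cmod w / (3 * (cabs + 1)).
set eta2 := e * Cmod s / (3 * (B2 + 1)).
assert (heta1 : 0 < eta1) by (unfold eta1; apply Rdiv_lt_0_compat; nra).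
assert (heta2 : 0 < eta2) by (unfold eta2; apply Rdiv_lt_0_compat; nra).
destruct (Rpower_small (Re s - 1) eta1) as [d1 [hd1 Hd1]]; [lra|exact heta1|].
destruct (Rpower_small (Re s - t) eta2) as [d2 [hd2 Hd2]]; [unfold t; lra|exact heta2|].
set del := Rmin 1 (Rmin d1 d2).
assert (hdel : 0 < del) by (unfold del; repeat apply Rmin_glb_lt; lra).
apply Filter_prod with (fun a => 0 < a < del) (fun b => b = 1).
- exists (mkposreal del hdel). intros y hy hy0. split; [exact hy0|].
  unfold ball in hy; simpl in hy. unfold AbsRing_ball, abs, minus, plus, opp in hy; simpl in hy.
  apply Rabs_lt_between in hy. lra.
- reflexivity.
- intros a b [ha0 hadel] ->. simpl.
  assert (ha1 : a < 1) by (eapply Rlt_le_trans; [exact hadel|apply Rmin_l]).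
  assert (had1 : a < d1) by (eapply Rlt_le_trans; [exact hadel|]; unfold del; eapply Rle_trans; [apply Rmin_r|apply Rmin_l]).
  assert (had2 : a < d2) by (eapply Rlt_le_trans; [exact hadel|]; unfold del; eapply Rle_trans; [apply Rmin_r|apply Rmin_r]).
  destruct (exists_ns (/ a)) as [N1 hN1].
  destruct (hcv (e * Cmod s / 3)) as [N0 hN0]; [nra|].
  set N := Nat.max N0 N1.
  set V := sum_n (fun i => sum_n (fun j => Cmult (RtoC (mobius (S i) * Rpower (ns i) (- eps))) (Ival s a (/ (ns i * ns j)))) N) N.
  exists (Cminus (Cmult (RtoC c) (Cdiv (Cminus (RtoC 1) (cpowR a w)) w)) V).
  split.
  + apply is_RInt_ext with (fun u => minus (Cmult (RtoC (c / u)) (cpowR u w)) (Cmult (RtoC (gfun eps N u)) (cpowR u w))).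
    * intros x hx. rewrite Rmin_left in hx; [|lra]. rewrite Rmax_right in hx; [|lra].
      rewrite (f_eps_decomp eps N x he); [|lra|].
      -- change (minus ?p ?q) with (Cminus p q). rewrite RtoC_minus. unfold c. Cfield.
      -- pose proof (ns_mono N1 N ltac:(unfold N; lia)).
         assert (/ x < / a) by (apply Rinv_lt_contravar; nra). lra.
    * apply: is_RInt_minus; [apply is_RInt_c; lra | apply is_RInt_g; [lra|lra|exact hs0]].
  + apply HP. apply ball_C.
    set Pr := Cmult (sum_n (aterm (Cplus s (RtoC eps))) N) (sum_n (zterm s) N).
    replace (Cminus (Cminus (Cmult (RtoC c) (Cdiv (Cminus (RtoC 1) (cpowR a w)) w)) V) L) with
      (Cplus (Cplus (Copp (Cmult (RtoC c) (Cdiv (cpowR a w) w)))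
                    (Copp (Cdiv (Cminus (Cmult s V) Pr) s)))
             (Copp (Cdiv (Cminus Pr AZ) s))) by (unfold L; field; split; [exact hs0|exact hs1]).
    eapply Rle_lt_trans; [apply Cmod_triangle|].
    eapply Rle_lt_trans; [apply Rplus_le_compat_r; apply Cmod_triangle|].
    rewrite !Cmod_opp Cmod_mult !Cmod_div //.
    rewrite Cmod_R Cmod_cpowR. fold cabs.
    pose proof (est_V eps s a N he ha0 hs) as hV. fold V t B2 Pr in hV.
    pose proof (hN0 N ltac:(unfold N; lia)) as h3. fold Pr in h3.
    assert (hw : Re w = Re s - 1) by (unfold w, Re, Cminus, Cplus, Copp, RtoC; simpl; ring).
    rewrite hw.
    pose proof (Hd1 a (conj ha0 had1)) as h1. pose proof (Hd2 a (conj ha0 had2)) as h2.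
    unfold Rpower in h1, h2, hV.
    set r1 := exp ((Re s - 1) * ln a) in h1 |- *.
    set r2 := exp ((Re s - t) * ln a) in h2, hV.
    assert (hr1 : 0 < r1) by apply exp_pos.
    assert (hr2 : 0 < r2) by apply exp_pos.
    assert (T1 : cabs * (r1 / Cmod w) < e / 3).
    { apply Rle_lt_trans with (cabs * (eta1 / Cmod w)).
      - apply Rmult_le_compat_l; [exact hcabs|]. apply Rmult_le_compat_r; [left; apply Rinv_0_lt_compat; lra|lra].
      - replace (cabs * (eta1 / Cmod w)) with (e / 3 - e / (3 * (cabs + 1))) by (unfold eta1; field; lra).
        assert (0 < e / (3 * (cabs + 1))) by (apply Rdiv_lt_0_compat; lra). lra. }
    assert (T2 : Cmod (Cminus (Cmult s V) Pr) / Cmod s < e / 3).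
    { apply Rle_lt_trans with (r2 * B2 / Cmod s).
      - apply Rmult_le_compat_r; [left; apply Rinv_0_lt_compat; lra|exact hV].
      - apply Rle_lt_trans with (eta2 * B2 / Cmod s).
        + apply Rmult_le_compat_r; [left; apply Rinv_0_lt_compat; lra|]. apply Rmult_le_compat_r; lra.
        + replace (eta2 * B2 / Cmod s) with (e / 3 - e / (3 * (B2 + 1))) by (unfold eta2; field; lra).
          assert (0 < e / (3 * (B2 + 1))) by (apply Rdiv_lt_0_compat; lra). lra. }
    assert (T3 : Cmod (Cminus Pr AZ) / Cmod s < e / 3).
    { assert (h3' : Cmod (Cminus Pr AZ) < e * Cmod s / 3) by exact h3.
      apply (Rmult_lt_reg_r (Cmod s)); [lra|].
      replace (Cmod (Cminus Pr AZ) / Cmod s * Cmod s) with (Cmod (Cminus Pr AZ)) by (field; lra). lra. }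
    unfold e in *. lra.
Qed.
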